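(* (1) Let $1\le\ell_1\le\dots\le\ell_r\le n$ and $T=C_r\otimes\cdots\otimes C_1$ with $C_i\in B(\varpi_{\ell_i})$. Then $\psi_T=\prod_{i=1}^{r-1}\psi_{C_{i+1}\otimes C_i}$. (2) Let $1\le a\le b\le n$, $F\in B(\varpi_b)$, $E\in B(\varpi_a)$. Then: (a) if $F\otimes E$ is not semistandard then $\psi_{F\otimes E}=0$; (b) if $E=(1,\dots,a)$ and $F\otimes E$ is semistandard then $\psi_{F\otimes E}=1$; (c) if $F\otimes E$ is semistandard and $j\notin E$, $j+1\in E$, then $$\psi_{F\otimes E}=\begin{cases}t\,\psi_{s_jF\otimes s_jE}+(1-t)\,\psi_{F\otimes s_jE}, & \text{if } j\in F,\ j+1\notin F,\\ \psi_{s_jF\otimes s_jE}, &\text{otherwise.}\end{cases}$$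
   Context: Fix $n\ge1$, $[n]=\{1,\dots,n\}$, $\varpi_k=\varepsilon_1+\dots+\varepsilon_k\in\mathbb Z^n$. A column of length $\ell$ is $C=(c_1<\dots<c_\ell)\subseteq[n]$; $B(\varpi_\ell)$ is their set. $s_jC$ is the column whose underlying set is the image of $C$ under the transposition $(j,j+1)$. A tensor $T=C_r\otimes\cdots\otimes C_1$ ($C_i\in B(\varpi_{\ell_i})$, $\ell_1\le\dots\le\ell_r$) is the filling of the Young diagram of $\sum\varpi_{\ell_i}$ with columns $C_r,\dots,C_1$ from left to right (each top to bottom); it is semistandard if entries weakly increase along rows from left to right. Macdonald's $\psi$: for partitions $\mu\subseteq\lambda$ with $\theta=\lambda-\mu$ a horizontal strip ($\lambda_1\ge\mu_1\ge\lambda_2\ge\mu_2\ge\cdots$), let $\theta'_j$ be the number of boxes of $\theta$ in column $j$, $J=\{j\ge1:\theta'_j=0,\ \theta'_{j+1}=1\}$, $m_j(\mu)=\#\{i:\mu_i=j\}$, and $\psi_{\lambda/\mu}=\prod_{j\in J}(1-t^{m_j(\mu)})$. For a semistandard $T$ let $T_{\le i}$ be the shape (partition) formed by the boxes with entries $\le i$, and $\psi_T=\prod_{i=1}^{n-1}\psi_{T_{\le i+1}/T_{\le i}}\in\mathbb Z[t]$. For non-semistandard $T$ set $\psi_T=0$. *)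

(* Defs.v *)
From mathcomp Require Import all_boot all_order all_algebra.
Set Implicit Arguments. Unset Strict Implicit. Unset Printing Implicit Defensive.
Import GRing.Theory.
Local Open Scope ring_scope.

(* A column of length l in [n] = {1,..,n}: a strictly increasing sequence
   c_1 < ... < c_l of elements of [n]  (an element of B(varpi_l)). *)
Definition is_column (n l : nat) (C : seq nat) : bool :=
  [&& size C == l, sorted ltn C & all (fun c => (0 < c) && (c <= n)) C]%N.

Definition swapj (j c : nat) : nat :=
  if c == j then j.+1 else if c == j.+1 then j else c.

Definition sj (j : nat) (C : seq nat) : seq nat := sort leq (map (swapj j) C).

(* A tensor C_r (x) ... (x) C_1 is represented by the list of its columns
   from LEFT to RIGHT, i.e. [:: C_r; ...; C_1]; each column is read top to
   bottom, so the entry of row k (0-based) of column C is nth 0 C k. *)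

Definition semistandard (T : seq (seq nat)) : bool :=
  [forall p : 'I_(size T), forall q : 'I_(size T),
     (p < q)%N ==>
     [forall k : 'I_(size (nth [::] T q)),
        (k < size (nth [::] T p))%N ==>
        (nth 0 (nth [::] T p) k <= nth 0 (nth [::] T q) k)%N]].

(* T_{<= i}: the shape formed by the boxes with entries <= i, given by its
   row lengths (row k = number of boxes of row k with entry <= i). *)
Definition shape_le (T : seq (seq nat)) (i : nat) : seq nat :=
  [seq count (fun C => (k < size C) && (nth 0 C k <= i))%N T
  | k <- iota 0 (foldr maxn 0 (map size T))].

(* Partitions are given by their row lengths (trailing zeros allowed). *)
Definition conjp (lam : seq nat) (j : nat) : nat := count (fun x => j <= x)%N lam.
Definition mult (mu : seq nat) (j : nat) : nat := count (pred1 j) mu.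
Definition thetap (lam mu : seq nat) (j : nat) : nat := (conjp lam j - conjp mu j)%N.

(* Macdonald's psi_{lambda/mu} = prod_{j in J} (1 - t^{m_j(mu)}) in Z[t],
   J = { j >= 1 : theta'_j = 0, theta'_{j+1} = 1 }.  Any j in J satisfies
   j + 1 <= lambda_1 <= sumn lambda, so ranging over 1 <= j <= sumn lambda
   covers all of J. *)
Definition psi_skew (lam mu : seq nat) : {poly int} :=
  \prod_(j <- iota 1 (sumn lam) |
          (thetap lam mu j == 0%N) && (thetap lam mu j.+1 == 1%N))
     (1 - 'X ^+ mult mu j).

Definition psiT (n : nat) (T : seq (seq nat)) : {poly int} :=
  if semistandard T then
    \prod_(1 <= i < n) psi_skew (shape_le T i.+1) (shape_le T i)
  else 0.

(* Main.v *)
Require Import Defs.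
From mathcomp Require Import all_boot all_order all_algebra.
From mathcomp Require Import zify ring.
Import GRing.Theory.
Set Implicit Arguments. Unset Strict Implicit. Unset Printing Implicit Defensive.


Definition cnt (C : seq nat) (i : nat) : nat := count (fun x => x <= i)%N C.

Lemma semistandardP T :
  reflect (forall p q k, (p < q)%N -> (q < size T)%N ->
     (k < size (nth [::] T q))%N -> (k < size (nth [::] T p))%N ->
     (nth 0 (nth [::] T p) k <= nth 0 (nth [::] T q) k)%N)
    (semistandard T).
Proof.
apply: (iffP forallP).
- move=> H p q k pq qT kq kp.
  have pT : (p < size T)%N by apply: ltn_trans qT.
  move: (H (Ordinal pT)) => /forallP /(_ (Ordinal qT)) /implyP /(_ pq)
    /forallP /(_ (Ordinal kq)) /implyP /(_ kp); done.
- move=> H p; apply/forallP => q; apply/implyP => pq; apply/forallP => k.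
  apply/implyP => kp; exact: H.
Qed.

Lemma count_prefix (A : Type) (x0 : A) (P : pred A) (s : seq A) j :
  ~~ P x0 ->
  (forall p q, (p <= q)%N -> (q < size s)%N -> P (nth x0 s q) -> P (nth x0 s p)) ->
  (j < count P s)%N = P (nth x0 s j).
Proof.
move=> nP0; elim: s j => [|x s IH] j H; first by rewrite nth_nil (negbTE nP0).
case Px: (P x) => /=.
- case: j => [|j] //=; first by rewrite Px.
  rewrite Px add1n ltnS IH //= => p q pq qs; apply: (H p.+1 q.+1) => //.
- rewrite Px add0n.
  have Hn : forall k, P (nth x0 (x :: s) k) = false.
    move=> k; apply/negbTE/negP => Pk.
    case: (ltnP k (size (x :: s))) => ks.
      by move: (H 0 k isT ks Pk) => /=; rewrite Px.
    by move: Pk; rewrite nth_default // (negbTE nP0).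
  have -> : count P s = 0.
    apply/eqP; rewrite -leqn0 leqNgt -has_count.
    apply/negP => /(has_nthP x0) [k ks Pk]; move: (Hn k.+1) => /=; rewrite Pk.
    done.
  by move: (Hn j) => ->.
Qed.

Lemma size_nth_max (T : seq (seq nat)) j :
  (size (nth [::] T j) <= foldr maxn 0 (map size T))%N.
Proof.
elim: T j => [|x T IH] [|j] //=; first by rewrite leq_maxl.
exact: leq_trans (IH j) (leq_maxr _ _).
Qed.

Definition sz_mono (T : seq (seq nat)) := forall p q, (p <= q)%N -> (q < size T)%N ->
  (size (nth [::] T q) <= size (nth [::] T p))%N.

Lemma K1 T i j : sz_mono T -> semistandard T ->
  conjp (shape_le T i) j.+1 = cnt (nth [::] T j) i.
Proof.
move=> hsz /semistandardP hss.
rewrite /conjp /shape_le count_map.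
set Tj := nth [::] T j.
set M := foldr maxn 0 _.
transitivity (count (fun k => (k < size Tj) && (nth 0 Tj k <= i))%N (iota 0 M)).
  apply: eq_count => k /=.
  rewrite (count_prefix (x0 := [::]) (P := fun C => (k < size C) && (nth 0 C k <= i))%N) //.
  move=> p q pq qT /andP[kq le]; rewrite leq_eqVlt in pq.
  case/orP: pq => [/eqP -> | pq]; first by rewrite kq.
  have kp : (k < size (nth [::] T p))%N by apply: leq_trans kq (hsz _ _ (ltnW pq) qT).
  by rewrite kp (leq_trans (hss _ _ _ pq qT kq kp) le).
have hM : (size Tj <= M)%N by apply: size_nth_max.
rewrite -(subnKC hM) iotaD count_cat.
have -> : count (fun k => (k < size Tj) && (nth 0 Tj k <= i))%N (iota (0 + size Tj) (M - size Tj)) = 0.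
  rewrite (eq_in_count (a2 := pred0)) ?count_pred0 // => k; rewrite mem_iota add0n.
  by case/andP => h _ /=; rewrite ltnNge h.
rewrite addn0 (eq_in_count (a2 := fun k => nth 0 Tj k <= i)%N); last first.
  by move=> k; rewrite mem_iota add0n /= => ->.
by rewrite -(count_map (nth 0 Tj) (fun x => x <= i)%N) -/(mkseq _ _) mkseq_nth.
Qed.


Definition g (i : nat) (C D : seq nat) : {poly int} :=
  if (cnt C i.+1 - cnt C i == 0)%N && (cnt D i.+1 - cnt D i == 1)%N
  then (1 - 'X ^+ (cnt C i - cnt D i))%R else 1%R.

Lemma conjp_split mu j : conjp mu j = (mult mu j + conjp mu j.+1)%N.
Proof.
rewrite /conjp /mult; elim: mu => //= x mu ->.
have : ((j <= x) = (x == j) + (j < x) :> nat)%N by case: ltngtP => //.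
lia.
Qed.

Lemma count_ge_sumn s k : (0 < count (fun x => k <= x) s)%N -> (k <= sumn s)%N.
Proof.
elim: s => //= x s IH.
case: (leqP k x) => kx /=.
  by move=> _; apply: leq_trans kx (leq_addr _ _).
by rewrite add0n => /IH h; apply: leq_trans h (leq_addl _ _).
Qed.

Lemma L (h : nat -> {poly int}) K M : (forall j, (K < j)%N -> h j = 1%R) -> (K <= M)%N ->
  (\prod_(j <- iota 1 M) h j = \prod_(j <- iota 1 K) h j)%R.
Proof.
move=> H KM; rewrite -(subnKC KM) iotaD big_cat /= [X in (_ * X)%R]big1_seq ?mulr1 //.
move=> j /andP[_]; rewrite mem_iota => /andP[h1 _]; apply: H; lia.
Qed.

Lemma psi_skew_T T i : sz_mono T -> semistandard T ->
  psi_skew (shape_le T i.+1) (shape_le T i) =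
  (\prod_(1 <= j < size T) g i (nth [::] T j.-1) (nth [::] T j))%R.
Proof.
move=> hsz hss; rewrite /psi_skew big_mkcond /=.
set h := fun j => g i (nth [::] T j.-1) (nth [::] T j).
rewrite (eq_big_seq h); last first.
  move=> j; rewrite mem_iota => /andP[j1 _]; case: j j1 => // j _.
  rewrite /h /g /thetap /mult /=.
  rewrite !K1 //.
  have e : count_mem j.+1 (shape_le T i) = (cnt (nth [::] T j) i - cnt (nth [::] T j.+1) i)%N.
    by move: (conjp_split (shape_le T i) j.+1); rewrite /mult !K1 // => ->; rewrite addnK.
  by rewrite e.
set S := sumn _.
have hS : forall j, (S < j)%N -> h j = 1%R.
  move=> j Sj; rewrite /h /g; case: ifP => // /andP[_ /eqP h1].
  have : (0 < conjp (shape_le T i.+1) j.+1)%N by rewrite K1 //; lia.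
  move/count_ge_sumn; rewrite -/S; lia.
have hT : forall j, (size T - 1 < j)%N -> h j = 1%R.
  move=> j Tj; rewrite /h /g (nth_default [::] (_ : size T <= j)%N) //; last by lia.
  by rewrite /cnt /= andbF.
rewrite (@L h (minn S (size T - 1)) S); last by rewrite geq_minl.
  2: by move=> j; rewrite gtn_min => /orP[]; [apply: hS | apply: hT].
rewrite /index_iota (@L h (minn S (size T - 1)) (size T - 1)) //.
  by move=> j; rewrite gtn_min => /orP[]; [apply: hS | apply: hT].
by rewrite geq_minr.
Qed.

Lemma Key n T : sz_mono T -> semistandard T ->
  psiT n T = (\prod_(1 <= i < n) \prod_(1 <= j < size T) g i (nth [::] T j.-1) (nth [::] T j))%R.
Proof.
move=> hsz hss; rewrite /psiT hss; apply: eq_bigr => i _; exact: psi_skew_T.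
Qed.


Lemma cnt_split C i : cnt C i.+1 = (cnt C i + count_mem i.+1 C)%N.
Proof.
rewrite /cnt; elim: C => //= x C ->.
have : ((x <= i.+1) = (x <= i) + (x == i.+1) :> nat)%N by case: (ltngtP x i.+1) => h; lia.
lia.
Qed.

Lemma cnt_sorted s i k : sorted leq s ->
  (k < cnt s i)%N = (k < size s)%N && (nth 0 s k <= i)%N.
Proof.
elim: s k => [|x s IH] k //= hs.
have hs' := path_sorted hs.
case: (leqP x i) => xi.
  rewrite /cnt /= add1n -/(cnt s i); case: k => [|k] //=.
  by rewrite !ltnS IH.
have hall := order_path_min leq_trans hs.
have -> : cnt s i = 0.
  rewrite /cnt (eq_in_count (a2 := pred0)) ?count_pred0 // => y ys /=.
  by move/allP: hall => /(_ y ys) xy; apply/negbTE; rewrite -ltnNge; apply: leq_trans xy.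
rewrite /cnt /= add0n; case: k => [|k] /=; first by apply/esym/negbTE; rewrite -ltnNge.
apply/esym/negbTE; apply/negP => /andP[ks le].
move/allP: hall => /(_ _ (mem_nth 0 ks)) h; by move: (leq_trans h le); rewrite leqNgt xi.
Qed.

Lemma ss2_cnt C D : sorted leq C -> sorted leq D -> (size D <= size C)%N ->
  semistandard [:: C; D] <-> (forall i, cnt D i <= cnt C i)%N.
Proof.
move=> sC sD szDC; split.
- move/semistandardP => hss i.
  case e: (cnt D i) => [|m] //.
  have : (m < cnt D i)%N by rewrite e.
  rewrite cnt_sorted // => /andP[mD le].
  have mC : (m < size C)%N by apply: leq_trans szDC.
  have := hss 0 1 m isT isT mD mC; rewrite /= => h.
  have : (m < cnt C i)%N by rewrite cnt_sorted // mC (leq_trans h le).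
  done.
- move=> H; apply/semistandardP => p q k pq q2 kq kp.
  move: q2 => /= q2; have p0 : p = 0 by lia.
  have q1 : q = 1 by lia.
  subst p q => /=; move: kq kp => /= kq kp.
  have : (k < cnt D (nth 0 D k))%N by rewrite cnt_sorted // kq leqnn.
  move=> h; have : (k < cnt C (nth 0 D k))%N by apply: leq_trans h (H _).
  by rewrite cnt_sorted // => /andP[].
Qed.

Lemma cnt_sj C j i : cnt (sj j C) i = count (fun c => swapj j c <= i)%N C.
Proof.
by rewrite /cnt /sj (permP (permEl (perm_sort leq _))) count_map.
Qed.

Lemma cnt_sj_ne C j i : i != j -> cnt (sj j C) i = cnt C i.
Proof.
move=> ij; rewrite cnt_sj; apply: eq_count => c /=.
rewrite /swapj; case: eqP => [->|cj]; first by move: ij; case: ltngtP.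
case: eqP => [->|cj1] //; move: ij; case: ltngtP => //.
Qed.

Lemma cnt_sj_j C j : (0 < j)%N -> cnt (sj j C) j = (cnt C j.-1 + count_mem j.+1 C)%N.
Proof.
move=> j0; rewrite cnt_sj /cnt; elim: C => //= c C ->.
have : ((swapj j c <= j) = (c <= j.-1) + (c == j.+1) :> nat)%N.
  by rewrite /swapj; case: eqP => [->|cj]; [|case: eqP => [->|cj1]]; lia.
lia.
Qed.


Lemma psiT_nss n T : ~~ semistandard T -> psiT n T = 0%R.
Proof. by rewrite /psiT => /negbTE ->. Qed.

Lemma psi2 n C D : (0 < n)%N -> sorted leq C -> sorted leq D -> cnt C 0 = 0 -> cnt D 0 = 0 ->
  (size D <= size C)%N -> semistandard [:: C; D] ->
  psiT n [:: C; D] = (\prod_(0 <= i < n) g i C D)%R.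
Proof.
move=> n0 sC sD C0 D0 szDC hss.
rewrite Key //; last first.
  move=> [|[|p]] [|[|q]] //=.
rewrite (big_ltn n0) /=.
have -> : g 0 C D = 1%R.
  rewrite /g C0 D0 !subn0; case: ifP => // /andP[/eqP a /eqP b].
  have := (ss2_cnt sC sD szDC).1 hss 1; lia.
rewrite mul1r; apply: eq_bigr => i _; by rewrite big_nat1.
Qed.

Lemma swapjK j : involutive (swapj j).
Proof. move=> c; rewrite /swapj; repeat case: eqP; lia.
Qed.

Lemma sj_sorted j C : sorted leq (sj j C).
Proof. exact: sort_sorted leq_total _. Qed.

Lemma sj_uniq j C : uniq C -> uniq (sj j C).
Proof.
move=> uC; rewrite /sj (perm_uniq (permEl (perm_sort leq _))).
by rewrite (map_inj_uniq (can_inj (swapjK j))).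
Qed.

Lemma sj_size j C : size (sj j C) = size C.
Proof. by rewrite /sj size_sort size_map. Qed.

Lemma Psplit (h : nat -> {poly int}) n j : (0 < j < n)%N ->
  (\prod_(0 <= i < n) h i = (\prod_(0 <= i < j.-1) h i * \prod_(j.+1 <= i < n) h i) * (h j.-1 * h j))%R.
Proof.
case/andP=> j0 jn.
rewrite (big_cat_nat (n := j.-1)) //=; last by lia.
rewrite (big_ltn (_ : j.-1 < n)%N); last by lia.
rewrite prednK // (big_ltn jn).
ring.
Qed.


Lemma part2c n F E j : (0 < j < n)%N -> sorted leq F -> sorted leq E -> uniq F -> uniq E ->
  cnt F 0 = 0 -> cnt E 0 = 0 -> (size E <= size F)%N -> semistandard [:: F; E] ->
  j \notin E -> j.+1 \in E ->
  psiT n [:: F; E] =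
   (if (j \in F) && (j.+1 \notin F) then
      'X * psiT n [:: sj j F; sj j E] + (1 - 'X) * psiT n [:: F; sj j E]
    else psiT n [:: sj j F; sj j E])%R.
Proof.
move=> hj sF sE uF uE F0 E0 szEF hss jE j1E.
have n0 : (0 < n)%N by lia.
have j0 : (0 < j)%N by lia.
have hc := (ss2_cnt sF sE szEF).1 hss.
have sj0 : forall C, cnt C 0 = 0 -> cnt (sj j C) 0 = 0.
  by move=> C C0; rewrite cnt_sj_ne ?C0 // eq_sym -lt0n.
have ssof : forall C' D', sorted leq C' -> sorted leq D' -> (size D' <= size C')%N ->
    (forall k, k != j -> cnt D' k <= cnt C' k)%N -> (cnt D' j <= cnt C' j)%N ->
    semistandard [:: C'; D'].
  move=> C' D' s1 s2 s3 h1 h2; apply/(ss2_cnt s1 s2 s3) => k.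
  by case: (eqVneq k j) => [->|kj] //; apply: h1.
set R := fun C D => (\prod_(0 <= i < j.-1) g i C D * \prod_(j.+1 <= i < n) g i C D)%R.
have dec : forall C D, semistandard [:: C; D] -> sorted leq C -> sorted leq D ->
    cnt C 0 = 0 -> cnt D 0 = 0 -> (size D <= size C)%N ->
    psiT n [:: C; D] = (R C D * (g j.-1 C D * g j C D))%R.
  by move=> C D h1 h2 h3 h4 h5 h6; rewrite psi2 // (Psplit _ hj).
have gR : forall C D C' D' i, i != j -> i.+1 != j ->
    (forall k, k != j -> cnt C' k = cnt C k) -> (forall k, k != j -> cnt D' k = cnt D k) ->
    g i C' D' = g i C D.
  by move=> C D C' D' i h1 h2 h3 h4; rewrite /g !h3 // !h4.
have RE : forall C D C' D',
    (forall k, k != j -> cnt C' k = cnt C k) -> (forall k, k != j -> cnt D' k = cnt D k) ->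
    R C' D' = R C D.
  move=> C D C' D' h3 h4; rewrite /R /=; congr (_ * _)%R; apply: eq_big_nat => i hi;
    apply: gR => //; lia.
have gm : forall C D, g j.-1 C D = (if (cnt C j - cnt C j.-1 == 0)%N && (cnt D j - cnt D j.-1 == 1)%N
    then 1 - 'X ^+ (cnt C j.-1 - cnt D j.-1) else 1)%R.
  by move=> C D; rewrite /g prednK.
have c1 : forall C, cnt C j = (cnt C j.-1 + count_mem j C)%N.
  by move=> C; have := cnt_split C j.-1; rewrite prednK.
have c2 : forall C, cnt C j.+1 = (cnt C j + count_mem j.+1 C)%N.
  by move=> C; rewrite cnt_split.
have s1 : forall C, cnt (sj j C) j.-1 = cnt C j.-1.
  by move=> C; rewrite cnt_sj_ne //; lia.
have s2 : forall C, cnt (sj j C) j = (cnt C j.-1 + count_mem j.+1 C)%N.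
  by move=> C; rewrite cnt_sj_j.
have s3 : forall C, cnt (sj j C) j.+1 = cnt C j.+1.
  by move=> C; rewrite cnt_sj_ne //; lia.
have sne : forall C k, k != j -> cnt (sj j C) k = cnt C k by move=> C k; apply: cnt_sj_ne.
have RsF : R (sj j F) (sj j E) = R F E by apply: RE => k; apply: cnt_sj_ne.
have RF : R F (sj j E) = R F E by apply: RE => // k; apply: cnt_sj_ne.
have hcm := hc j.-1.
have hcp := hc j.+1.
rewrite !c2 !c1 (count_uniq_mem _ uF) (count_uniq_mem _ uF) (count_uniq_mem _ uE)
  (count_uniq_mem _ uE) (negbTE jE) j1E in hcp.
have eF : psiT n [:: F; E] = (R F E * (g j.-1 F E * g j F E))%R by apply: dec.
have sFs := sj_sorted j F.
have sEs := sj_sorted j E.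
have szs : (size (sj j E) <= size (sj j F))%N by rewrite !sj_size.
have szs' : (size (sj j E) <= size F)%N by rewrite !sj_size.
have uFm := count_uniq_mem _ uF.
have uEm := count_uniq_mem _ uE.
have g1 : g j.-1 F E = 1%R.
  rewrite gm c1 [cnt E j]c1 uEm (negbTE jE) addn0 subnn /=.
  by rewrite andbF.
have g2 : g j F E = (if j.+1 \notin F then 1 - 'X ^+ (cnt F j.-1 + (j \in F) - cnt E j.-1) else 1)%R.
  rewrite /g c2 [cnt E j.+1]c2 !c1 !uFm !uEm (negbTE jE) j1E !addKn /= !addn0.
  by case: (j.+1 \in F).
have g3 : g j.-1 (sj j F) (sj j E) = (if j.+1 \notin F then 1 - 'X ^+ (cnt F j.-1 - cnt E j.-1) else 1)%R.
  rewrite gm !s2 !s1 !uFm !uEm j1E !addKn /=.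
  by case: (j.+1 \in F).
have g4 : g j (sj j F) (sj j E) = 1%R.
  rewrite /g !s3 !s2 c2 [cnt E j.+1]c2 !c1 !uFm !uEm (negbTE jE) j1E /= addn0 addn1 subnn /=.
  by rewrite andbF.
have g5 : g j.-1 F (sj j E) = (if j \notin F then 1 - 'X ^+ (cnt F j.-1 - cnt E j.-1) else 1)%R.
  rewrite gm c1 !s2 !s1 !uFm !uEm j1E !addKn /=.
  by case: (j \in F).
have g6 : g j F (sj j E) = 1%R.
  rewrite /g !s3 !s2 [cnt E j.+1]c2 [cnt E j]c1 !uEm (negbTE jE) j1E /= addn0 addn1 subnn /=.
  by rewrite andbF.
have ssS : (cnt E j.-1 + 1 <= cnt F j.-1 + (j.+1 \in F))%N -> semistandard [:: sj j F; sj j E].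
  move=> h; apply: ssof => // [k kj|]; first by rewrite !sne //; exact: hc.
  by rewrite !s2 uFm uEm j1E.
have nssS : semistandard [:: sj j F; sj j E] -> (cnt E j.-1 + 1 <= cnt F j.-1 + (j.+1 \in F))%N.
  by move/(ss2_cnt sFs sEs szs).1/(_ j); rewrite !s2 uFm uEm j1E.
have ssFs : (cnt E j.-1 + 1 <= cnt F j.-1 + (j \in F))%N -> semistandard [:: F; sj j E].
  move=> h; apply: ssof => // [k kj|]; first by rewrite sne //; exact: hc.
  by rewrite s2 c1 uFm uEm j1E.
have eS : semistandard [:: sj j F; sj j E] -> psiT n [:: sj j F; sj j E] =
    (R F E * ((if j.+1 \notin F then 1 - 'X ^+ (cnt F j.-1 - cnt E j.-1) else 1) * 1))%R.
  by move=> h; rewrite dec ?RsF ?g3 ?g4 ?sj0 ?sj_size.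
have eFs : semistandard [:: F; sj j E] -> psiT n [:: F; sj j E] =
    (R F E * ((if j \notin F then 1 - 'X ^+ (cnt F j.-1 - cnt E j.-1) else 1) * 1))%R.
  by move=> h; rewrite dec ?RF ?g5 ?g6 ?sj0 ?sj_size.
rewrite eF g1 g2.
move: hcp ssS nssS ssFs eS eFs.
case: (j \in F); case: (j.+1 \in F) => /= hcp ssS nssS ssFs eS eFs.
- by rewrite eS ?mul1r ?mulr1 //; apply: ssS; clear -hcm; lia.
- rewrite eFs ?mul1r ?mulr1; last by apply: ssFs; clear -hcm; lia.
  case: (ltnP (cnt E j.-1) (cnt F j.-1)) => hlt.
    rewrite eS; last by apply: ssS; clear -hlt; lia.
    have -> : (cnt F j.-1 + 1 - cnt E j.-1 = (cnt F j.-1 - cnt E j.-1).+1)%N by clear -hlt; lia.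
    rewrite exprS; ring.
  rewrite psiT_nss; last by apply/negP => /nssS; clear -hlt; lia.
  have -> : (cnt F j.-1 + 1 - cnt E j.-1 = 1)%N by clear -hlt hcm; lia.
  rewrite expr1; ring.
- by rewrite eS ?mul1r ?mulr1 //; apply: ssS; clear -hcm; lia.
- by rewrite eS ?mul1r ?mulr1 ?addn0 //; apply: ssS; clear -hcp; lia.
Qed.


Lemma pairP C D : semistandard [:: C; D] ->
  forall k, (k < size D)%N -> (k < size C)%N -> (nth 0 C k <= nth 0 D k)%N.
Proof. by move/semistandardP => h k kD kC; apply: (h 0 1). Qed.

Lemma pair_of T p : semistandard T -> (p.+1 < size T)%N ->
  semistandard [:: nth [::] T p; nth [::] T p.+1].
Proof.
move/semistandardP => h pT; apply/semistandardP => p' q' k pq q2 kq kp.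
move: q2 => /= q2; have p0 : p' = 0 by lia.
have q1 : q' = 1 by lia.
subst p' q'; exact: h.
Qed.

Lemma chain T : sz_mono T ->
  (forall p, (p.+1 < size T)%N -> semistandard [:: nth [::] T p; nth [::] T p.+1]) ->
  semistandard T.
Proof.
move=> hsz hadj; apply/semistandardP => p q k pq qT kq kp.
elim: q pq qT kq => // q IH pq qT kq.
have qT' : (q < size T)%N by apply: ltnW.
have kq' : (k < size (nth [::] T q))%N by apply: leq_trans kq (hsz _ _ (leqnSn q) qT).
have h2 := pairP (hadj q qT) kq kq'.
rewrite ltnS leq_eqVlt in pq; case/orP: pq => [/eqP -> | pq] //.
exact: leq_trans (IH pq qT' kq') h2.
Qed.

Lemma sz_mono2 C D : (size D <= size C)%N -> sz_mono [:: C; D].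
Proof. by move=> h [|[|p]] [|[|q]]. Qed.

Lemma Key2 n C D : (size D <= size C)%N -> semistandard [:: C; D] ->
  psiT n [:: C; D] = (\prod_(1 <= i < n) g i C D)%R.
Proof.
move=> h hss; rewrite Key //; last exact: sz_mono2.
apply: eq_bigr => i _; by rewrite big_nat1.
Qed.

Lemma part1 n r (l : nat -> nat) (C : nat -> seq nat) :
  (0 < r)%N ->
  (forall i, (1 <= i < r)%N -> (l i <= l i.+1)%N) ->
  (forall i, (1 <= i <= r)%N -> size (C i) = l i) ->
  psiT n [seq C (r - k)%N | k <- iota 0 r]
       = (\prod_(1 <= i < r) psiT n [:: C i.+1; C i])%R.
Proof.
move=> r0 hl hsz.
set T := [seq C (r - k)%N | k <- iota 0 r].
have sT : size T = r by rewrite size_map size_iota.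
have nT : forall p, (p < r)%N -> nth [::] T p = C (r - p)%N.
  by move=> p pr; rewrite (nth_map 0) ?size_iota // nth_iota.
have lmono : forall a b, (1 <= a)%N -> (a <= b)%N -> (b <= r)%N -> (l a <= l b)%N.
  move=> a b a1 ab br; elim: b ab br => [|b IH] ab br; first by lia.
  rewrite leq_eqVlt in ab; case/orP: ab => [/eqP -> //| ab].
  apply: leq_trans (IH ab (ltnW br)) (hl _ _); lia.
have hm : sz_mono T.
  move=> p q pq qT; rewrite sT in qT; rewrite !nT ?hsz; try lia.
  apply: lmono; lia.
have adj : forall i, (1 <= i < r)%N ->
    [:: C i.+1; C i] = [:: nth [::] T (r - i.+1); nth [::] T (r - i.+1).+1].
  by move=> i hi; rewrite !nT; try lia; congr [:: C _; C _]; lia.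
have szp : forall i, (1 <= i < r)%N -> (size (C i) <= size (C i.+1))%N.
  by move=> i hi; rewrite !hsz; [exact: hl | lia | lia].
case hss: (semistandard T).
- rewrite Key // sT.
  transitivity (\prod_(1 <= i < r) \prod_(1 <= i0 < n) g i0 (C i.+1) (C i))%R; last first.
    apply: eq_big_nat => i hi; rewrite Key2 ?szp //.
    by rewrite adj //; apply: pair_of => //; rewrite sT; lia.
  rewrite [RHS]exchange_big; apply: eq_bigr => i _.
  rewrite [LHS]big_nat_rev; apply: eq_big_nat => j hj.
  rewrite !nT; try lia.
  congr (g i (C _) (C _)); lia.
- rewrite psiT_nss ?hss //.
  case hall: (all (fun i => semistandard [:: C i.+1; C i]) (index_iota 1 r)).
    move: hss; rewrite chain //; move=> p pT; rewrite sT in pT.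
    move/allP: hall => /(_ (r - p.+1)%N); rewrite mem_index_iota.
    have -> : [:: C (r - p.+1).+1; C (r - p.+1)] = [:: nth [::] T p; nth [::] T p.+1].
      by rewrite !nT; try lia; congr [:: C _; C _]; lia.
    by move=> h; apply: h; lia.
  apply/esym/eqP; rewrite prodf_seq_eq0; apply/hasP.
  move/negbT/allPn: hall => [i hi nss]; exists i => //.
  by rewrite /= psiT_nss.
Qed.


Lemma cnt_iota a m : cnt (iota 1 a) m = minn m a.
Proof.
elim: a => [|a IH]; first by rewrite minn0.
rewrite -[a.+1]addn1 iotaD /cnt count_cat -/(cnt _ _) IH /=; lia.
Qed.

Lemma cnt_le C i : uniq C -> (forall x, x \in C -> 0 < x)%N -> (cnt C i <= i)%N.
Proof.
move=> uC pos; rewrite /cnt -size_filter.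
apply: (leq_trans (uniq_leq_size (s2 := iota 1 i) (filter_uniq _ uC) _)).
  move=> x; rewrite mem_filter mem_iota => /andP[xi xC]; have := pos x xC.
  move: xi; clear; lia.
by rewrite size_iota.
Qed.

Lemma col_facts n l C : is_column n l C ->
  [/\ size C = l, sorted leq C, uniq C, cnt C 0 = 0 & forall x, x \in C -> (0 < x)%N].
Proof.
case/and3P => /eqP sz srt /allP pos.
move: srt; rewrite ltn_sorted_uniq_leq => /andP[u s].
have pos' : forall x, x \in C -> (0 < x)%N by move=> x /pos /andP[].
split => //.
rewrite /cnt (eq_in_count (a2 := pred0)) ?count_pred0 // => x /pos' /=; lia.
Qed.

Lemma part2b n a F E : (0 < n)%N -> is_column n (size F) F -> is_column n a E ->
  (a <= size F)%N -> E = iota 1 a -> semistandard [:: F; E] -> psiT n [:: F; E] = 1%R.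
Proof.
move=> n0 cF cE aF Ee hss.
case: (col_facts cF) => _ sF uF F0 pF.
case: (col_facts cE) => szE sE uE E0 pE.
have szEF : (size E <= size F)%N by rewrite szE.
have hc := (ss2_cnt sF sE szEF).1 hss.
rewrite psi2 //; apply: big1 => i _.
rewrite /g; case: ifP => // /andP[/eqP h1 /eqP h2].
rewrite cnt_split addKn (count_uniq_mem _ uE) Ee mem_iota in h2.
have ia : (i < a)%N by move: h2; rewrite add1n /= !ltnS; case: (i < a)%N.
have h3 := hc i.+1; rewrite Ee cnt_iota in h3.
have h4 := cnt_le i uF pF.
move: h1 h3 h4 ia; clear; lia.
Qed.

Unset Implicit Arguments. Set Strict Implicit.

Local Open Scope ring_scope.

Theorem proposition4p1 (n : nat) (hn : (1 <= n)%N) :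
  (* (1) *)
  (forall (r : nat) (l : nat -> nat) (C : nat -> seq nat),
     (0 < r)%N -> (1 <= l 1)%N ->
     (forall i, (1 <= i < r)%N -> (l i <= l i.+1)%N) ->
     (l r <= n)%N ->
     (forall i, (1 <= i <= r)%N -> is_column n (l i) (C i)) ->
     psiT n [seq C (r - k)%N | k <- iota 0 r]
       = \prod_(1 <= i < r) psiT n [:: C i.+1; C i])
  /\
  (* (2) *)
  (forall (a b : nat) (F E : seq nat),
     (1 <= a)%N -> (a <= b)%N -> (b <= n)%N ->
     is_column n b F -> is_column n a E ->
     (* (a) *)
     (~~ semistandard [:: F; E] -> psiT n [:: F; E] = 0)
     /\
     (* (b) *)
     (E = iota 1 a -> semistandard [:: F; E] -> psiT n [:: F; E] = 1)
     /\
     (* (c) *)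
     (forall j : nat, (0 < j < n)%N ->
        semistandard [:: F; E] -> j \notin E -> j.+1 \in E ->
        psiT n [:: F; E] =
          if (j \in F) && (j.+1 \notin F) then
            'X * psiT n [:: sj j F; sj j E] + (1 - 'X) * psiT n [:: F; sj j E]
          else psiT n [:: sj j F; sj j E])).
Proof.
split.
- move=> r l C r0 l1 hl lr hcol; apply: (@part1 n r l C) => // i hi.
  by case: (col_facts (hcol i hi)) => ->.
- move=> a b F E a1 ab bn colF colE.
  case: (col_facts colF) => szF sF uF F0 pF.
  case: (col_facts colE) => szE sE uE E0 pE.
  have szEF : (size E <= size F)%N by rewrite szE szF.
  split; first exact: psiT_nss.
  split.
    move=> Ee hss; apply: (part2b (a := a)) => //; by rewrite szF.
  move=> j hj hss jE j1E; exact: part2c.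
Qed.
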